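(* The quantity $c^*_\infty=c^*_\infty(d,D,f'(0),g'(0))$, viewed as a function of $(d,D,f'(0),g'(0))\in(0,\infty)^4$, satisfies: (i) $\max\{c_f,c_g\}\leq c^*_\infty\leq 2\sqrt{\max\{D,d\}\max\{g'(0),f'(0)\}}$, and the last inequality is strict if and only if either ($D>d$ and $f'(0)>g'(0)$) or ($D<d$ and $f'(0)<g'(0)$); (ii) $c^*_\infty$ is continuous; (iii) for fixed $d,f'(0),g'(0)$, the map $D\mapsto c^*_\infty(D)$ is non-decreasing; (iv) $\lim_{D\to+\infty}c^*_\infty(D)/\sqrt D\in(0,+\infty)$.
   Context: For $D,d>0$ and $f'(0),g'(0)>0$: $c_f:=2\sqrt{df'(0)}$, $c_g:=2\sqrt{Dg'(0)}$, and $c^*_\infty:=c_f$ if $\frac{D}{d}\leq2-\frac{g'(0)}{f'(0)}$; $c^*_\infty:=c_g$ if $\frac{d}{D}\leq 2-\frac{f'(0)}{g'(0)}$; $c^*_\infty:=\frac{|Df'(0)-dg'(0)|}{\sqrt{(D-d)(f'(0)-g'(0))}}$ otherwise. (This is the asymptotic speed of propagation of the two-half-space system $u_t-D\Delta u=g(u)$ in $\{x_N<0\}$, $v_t-d\Delta v=f(v)$ in $\{x_N>0\}$, with exchange conditions $D\partial_{x_N}u=\nu v-\mu u$, $-d\partial_{x_N}v=\mu u-\nu v$ on $\{x_N=0\}$.) *)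

(* Defs.v *)
From Stdlib Require Import Reals Lra.
Open Scope R_scope.

(* Parameters: d, D > 0 diffusion coefficients; fp = f'(0) > 0, gp = g'(0) > 0. *)
Definition c_f (d fp : R) : R := 2 * sqrt (d * fp).
Definition c_g (D gp : R) : R := 2 * sqrt (D * gp).

Definition cstar_inf (d D fp gp : R) : R :=
  if Rle_dec (D / d) (2 - gp / fp) then c_f d fp
  else if Rle_dec (d / D) (2 - fp / gp) then c_g D gp
  else Rabs (D * fp - d * gp) / sqrt ((D - d) * (fp - gp)).

(* Main.v *)
From Stdlib Require Import Reals Lra Psatz.
Require Import Defs.
From Coquelicot Require Import Coquelicot.
Open Scope R_scope.

Lemma corner d D F G : 0<d -> 0<D -> 0<F -> 0<G ->
  D*F + d*G - 2*d*F <= 0 -> D*F + d*G - 2*D*G <= 0 -> D = d /\ F = G.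
Proof.
  intros. 
  assert (H5: (D-d)*(F-G) <= 0 -> D = d /\ F = G).
  { intros. destruct (Rtotal_order D d) as [h|[h|h]]; destruct (Rtotal_order F G) as [k|[k|k]]; try nra. }
  destruct (Rtotal_order D d) as [h|[h|h]]; destruct (Rtotal_order F G) as [k|[k|k]]; try nra.
Qed.

Lemma Kpos d D F G : 0<d -> 0<D -> 0<F -> 0<G ->
  0 <= D*F + d*G - 2*d*F -> 0 <= D*F + d*G - 2*D*G -> ~ (D = d /\ F = G) ->
  0 < (D-d)*(F-G).
Proof.
  intros.
  destruct (Rtotal_order D d) as [h|[h|h]]; destruct (Rtotal_order F G) as [k|[k|k]]; try nra.

Qed.

Lemma lowA d D F G : 0<d -> 0<D -> 0<F -> 0<G ->
  D*F + d*G - 2*d*F <= 0 -> D*G <= d*F.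
Proof. intros. assert (h1: 4*(D*F)*(d*G) <= (D*F+d*G)^2) by (pose proof (pow2_ge_0 (D*F-d*G)); nra).
  assert (h2: (D*F+d*G)^2 <= (2*d*F)^2) by (assert (0 <= D*F+d*G) by nra; nra).
  assert (h3: (d*F)*(D*G) <= (d*F)*(d*F)) by nra.
  assert (0 < d*F) by nra. nra. Qed.

Lemma lowB d D F G : 0<d -> 0<D -> 0<F -> 0<G ->
  D*F + d*G - 2*D*G <= 0 -> d*F <= D*G.
Proof. intros. assert (h1: 4*(D*F)*(d*G) <= (D*F+d*G)^2) by (pose proof (pow2_ge_0 (D*F-d*G)); nra).
  assert (h2: (D*F+d*G)^2 <= (2*D*G)^2) by (assert (0 <= D*F+d*G) by nra; nra).
  assert (h3: (D*G)*(d*F) <= (D*G)*(D*G)) by nra.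
  assert (0 < D*G) by nra. nra. Qed.

Lemma strictA d D F G : 0<d -> 0<D -> 0<F -> 0<G ->
  D*F + d*G - 2*d*F <= 0 -> (D > d -> F > G) /\ (G > F -> D < d).
Proof. intros. split; intros; nra. Qed.

Lemma strictB d D F G : 0<d -> 0<D -> 0<F -> 0<G ->
  D*F + d*G - 2*D*G <= 0 -> (D < d -> F < G) /\ (G < F -> D > d).
Proof. intros. split; intros; nra. Qed.

Lemma upE1 d D F G : 0<d -> 0<D -> 0<F -> 0<G -> D > d -> F > G ->
  0 < D*F + d*G - 2*d*F -> 0 < D*F + d*G - 2*D*G ->
  (D*F - d*G)^2 < 4*(D*F)*((D-d)*(F-G)).
Proof.
  intros. set (u := D-d). set (w := F-G).
  assert (e1: D*F + d*G - 2*d*F = F*u - d*w) by (unfold u,w; ring).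
  assert (e2: D*F + d*G - 2*D*G = D*w - G*u) by (unfold u,w; ring).
  assert (e3: 4*(D*F)*(u*w) - (D*F - d*G)^2 = 4*F*u^2*w - (F*u-d*w)^2) by (unfold u,w; ring).
  assert (hu: u>0) by (unfold u; lra). assert (hw: 0<w) by (unfold w; lra).
  assert (hw2: w < F) by (unfold w; lra).
  assert (b1: F*u - d*w < 2*u*w) by (unfold u,w in *; nra).
  assert (b2: (F*u - d*w)^2 < (2*u*w)^2) by nra.
  assert (b3: (2*u*w)^2 <= 4*F*u^2*w) by nra.
  lra.
Qed.

Lemma upE2 d D F G : 0<d -> 0<D -> 0<F -> 0<G -> D < d -> F < G ->
  0 < D*F + d*G - 2*d*F -> 0 < D*F + d*G - 2*D*G ->
  (D*F - d*G)^2 < 4*(d*G)*((D-d)*(F-G)).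
Proof.
  intros. set (u := d-D). set (w := G-F).
  assert (e1: D*F + d*G - 2*d*F = d*w - F*u) by (unfold u,w; ring).
  assert (e2: D*F + d*G - 2*D*G = G*u - D*w) by (unfold u,w; ring).
  assert (e3: 4*(d*G)*((D-d)*(F-G)) - (D*F - d*G)^2 = 4*G*u^2*w - (G*u-D*w)^2) by (unfold u,w; ring).
  assert (hu: u>0) by (unfold u; lra). assert (hw: 0<w) by (unfold w; lra).
  assert (hw2: w < G) by (unfold w; lra).
  assert (b1: G*u - D*w < 2*u*w) by (unfold u,w in *; nra).
  assert (b2: (G*u - D*w)^2 < (2*u*w)^2) by nra.
  assert (b3: (2*u*w)^2 <= 4*G*u^2*w) by nra.
  lra.
Qed.

Lemma condA d D F G : 0<d -> 0<F -> (D/d <= 2 - G/F <-> D*F + d*G - 2*d*F <= 0).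
Proof.
  intros. assert (e: (2 - G/F - D/d)*(d*F) = -(D*F + d*G - 2*d*F)) by (field; lra).
  assert (0 < d*F) by nra.
  split; intros. nra.
  destruct (Rle_dec (D/d) (2-G/F)); auto. nra.
Qed.

Lemma condB d D F G : 0<D -> 0<G -> (d/D <= 2 - F/G <-> D*F + d*G - 2*D*G <= 0).
Proof.
  intros. assert (e: (2 - F/G - d/D)*(D*G) = -(D*F + d*G - 2*D*G)) by (field; lra).
  assert (0 < D*G) by nra.
  split; intros. nra.
  destruct (Rle_dec (d/D) (2-F/G)); auto. nra.
Qed.

Definition fE d D F G := Rabs (D*F - d*G) / sqrt ((D-d)*(F-G)).

Lemma csA d D F G : 0<d -> 0<F -> D*F + d*G - 2*d*F <= 0 -> cstar_inf d D F G = c_f d F.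
Proof. intros. unfold cstar_inf. destruct Rle_dec as [h|h]; auto. exfalso; apply h, condA; auto. Qed.

Lemma csB d D F G : 0<d -> 0<D -> 0<F -> 0<G -> 0 < D*F + d*G - 2*d*F -> D*F + d*G - 2*D*G <= 0 ->
  cstar_inf d D F G = c_g D G.
Proof. intros. unfold cstar_inf. destruct Rle_dec as [h|h].
  apply condA in h; auto; lra.
  destruct Rle_dec as [k|k]; auto. exfalso; apply k, condB; auto. Qed.

Lemma csE d D F G : 0<d -> 0<D -> 0<F -> 0<G -> 0 < D*F + d*G - 2*d*F -> 0 < D*F + d*G - 2*D*G ->
  cstar_inf d D F G = fE d D F G.
Proof. intros. unfold cstar_inf. destruct Rle_dec as [h|h].
  apply condA in h; auto; lra.
  destruct Rle_dec as [k|k]; auto. apply condB in k; auto; lra. Qed.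

Lemma fE_sq d D F G : 0 < (D-d)*(F-G) ->
  fE d D F G ^2 = 4*(d*F) + (D*F + d*G - 2*d*F)^2/((D-d)*(F-G)) /\
  fE d D F G ^2 = 4*(D*G) + (D*F + d*G - 2*D*G)^2/((D-d)*(F-G)).
Proof.
  intros. unfold fE. unfold Rdiv. rewrite Rpow_mult_distr.
  rewrite pow2_abs. rewrite pow_inv. rewrite pow2_sqrt by lra.
  assert (D-d<>0) by (intro h; rewrite h in H; lra).
  assert (F-G<>0) by (intro h; rewrite h in H; lra).
  split; field; auto.
Qed.

Lemma fE_ge0 d D F G : 0 <= fE d D F G.
Proof. unfold fE. unfold Rdiv. apply Rmult_le_pos. apply Rabs_pos.
  destruct (Req_dec (sqrt ((D-d)*(F-G))) 0) as [e|e]. rewrite e, Rinv_0; lra.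
  left; apply Rinv_0_lt_compat. pose proof (sqrt_pos ((D-d)*(F-G))); lra. Qed.

Lemma sq_le a b : 0<=a -> 0<=b -> a^2 <= b^2 -> a <= b.
Proof. intros. nra. Qed.
Lemma sq_lt a b : 0<=a -> 0<=b -> a^2 < b^2 -> a < b.
Proof. intros. nra. Qed.
Lemma sq_lt_inv a b : 0<=a -> 0<=b -> a < b -> a^2 < b^2.
Proof. intros. nra. Qed.
Lemma c2sq X : 0 <= X -> (2*sqrt X)^2 = 4*X.
Proof. intros. rewrite Rpow_mult_distr, pow2_sqrt; auto; ring. Qed.
Lemma c2pos X : 0 <= 2*sqrt X.
Proof. pose proof (sqrt_pos X); lra. Qed.
Lemma divlt x y K : 0 < K -> x < y*K -> x/K < y.
Proof. intros. apply (Rmult_lt_reg_r K); auto. unfold Rdiv. rewrite Rmult_assoc, Rinv_l; lra. Qed.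
Lemma divge x K : 0 < K -> 0 <= x -> 0 <= x/K.
Proof. intros. unfold Rdiv. apply Rmult_le_pos; auto. left; apply Rinv_0_lt_compat; auto. Qed.
Lemma fE_sq3 d D F G : 0 < (D-d)*(F-G) -> fE d D F G ^2 = (D*F - d*G)^2/((D-d)*(F-G)).
Proof. intros. destruct (fE_sq d D F G H) as [h _]. rewrite h. 
  assert (D-d<>0) by (intro h'; rewrite h' in H; lra).
  assert (F-G<>0) by (intro h'; rewrite h' in H; lra). field; auto. Qed.

Lemma Mge d D F G : 0<d -> 0<D -> 0<F -> 0<G ->
   d*F <= Rmax D d * Rmax G F /\ D*G <= Rmax D d * Rmax G F /\ 0 <= Rmax D d * Rmax G F.
Proof. intros. unfold Rmax. destruct Rle_dec; destruct Rle_dec; repeat split; nra. Qed.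

Lemma partI d D F G : 0<d -> 0<D -> 0<F -> 0<G ->
     Rmax (c_f d F) (c_g D G) <= cstar_inf d D F G /\
     cstar_inf d D F G <= 2 * sqrt (Rmax D d * Rmax G F) /\
     (cstar_inf d D F G < 2 * sqrt (Rmax D d * Rmax G F) <->
        ((D > d /\ F > G) \/ (D < d /\ F < G))).
Proof.
  intros. destruct (Mge d D F G) as (m1&m2&m3); auto.
  unfold c_f, c_g.
  destruct (Rle_or_lt (D*F + d*G - 2*d*F) 0) as [hA|hA].
  - rewrite csA by auto. unfold c_f.
    pose proof (lowA d D F G H H0 H1 H2 hA).
    repeat split.
    + apply Rmax_lub. lra. apply Rmult_le_compat_l; [lra|]. apply sqrt_le_1_alt; lra.
    + apply Rmult_le_compat_l; [lra|]. apply sqrt_le_1_alt; lra.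
    + intro h. apply Rmult_lt_reg_l in h; [|lra]. apply sqrt_lt_0_alt in h.
      destruct (strictA d D F G H H0 H1 H2 hA).
      revert h. unfold Rmax. destruct Rle_dec; destruct Rle_dec; intros; nra.
    + intros hc. apply Rmult_lt_compat_l; [lra|]. apply sqrt_lt_1_alt. split; [nra|].
      unfold Rmax. destruct Rle_dec; destruct Rle_dec; nra.
  - destruct (Rle_or_lt (D*F + d*G - 2*D*G) 0) as [hB|hB].
    + rewrite csB by auto. unfold c_g.
      pose proof (lowB d D F G H H0 H1 H2 hB).
      repeat split.
      * apply Rmax_lub. apply Rmult_le_compat_l; [lra|]. apply sqrt_le_1_alt; lra. lra.
      * apply Rmult_le_compat_l; [lra|]. apply sqrt_le_1_alt; lra.
      * intro h. apply Rmult_lt_reg_l in h; [|lra]. apply sqrt_lt_0_alt in h.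
        destruct (strictB d D F G H H0 H1 H2 hB).
        revert h. unfold Rmax. destruct Rle_dec; destruct Rle_dec; intros; nra.
      * intros hc. apply Rmult_lt_compat_l; [lra|]. apply sqrt_lt_1_alt. split; [nra|].
        unfold Rmax. destruct Rle_dec; destruct Rle_dec; nra.
    + rewrite csE by auto.
      assert (hK: 0 < (D-d)*(F-G)) by (apply Kpos; auto; try lra; intros [e1 e2]; subst; nra).
      destruct (fE_sq d D F G hK) as [s1 s2].
      pose proof (fE_sq3 d D F G hK) as s3.
      pose proof (fE_ge0 d D F G).
      assert (hlt: fE d D F G < 2 * sqrt (Rmax D d * Rmax G F)).
      { apply sq_lt; auto. apply c2pos. rewrite c2sq by auto. rewrite s3. apply divlt; auto.
        destruct (Rtotal_order D d) as [h|[h|h]]; destruct (Rtotal_order F G) as [k|[k|k]]; try nra.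
        - replace (Rmax D d * Rmax G F) with (d*G). apply upE2; auto.
          unfold Rmax; destruct Rle_dec; destruct Rle_dec; lra.
        - replace (Rmax D d * Rmax G F) with (D*F). apply upE1; auto.
          unfold Rmax; destruct Rle_dec; destruct Rle_dec; lra. }
      repeat split.
      * apply Rmax_lub; apply sq_le; auto; try apply c2pos; rewrite c2sq by nra.
        rewrite s1. pose proof (divge ((D * F + d * G - 2 * d * F) ^ 2) _ hK (pow2_ge_0 _)). lra.
        rewrite s2. pose proof (divge ((D * F + d * G - 2 * D * G) ^ 2) _ hK (pow2_ge_0 _)). lra.
      * lra.
      * intros _. destruct (Rtotal_order D d) as [h|[h|h]]; destruct (Rtotal_order F G) as [k|[k|k]]; nra.
      * intros; auto.
Qed.

Lemma divle2 x y K1 K2 : 0 < K1 -> 0 < K2 -> x*K2 <= y*K1 -> x/K1 <= y/K2.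
Proof. intros. unfold Rdiv.
  assert (0 < /K1) by (apply Rinv_0_lt_compat; auto).
  assert (0 < /K2) by (apply Rinv_0_lt_compat; auto).
  assert (e: x * / K1 = (x*K2) * (/K1 * /K2)) by (field; lra).
  assert (e': y * / K2 = (y*K1) * (/K1 * /K2)) by (field; lra).
  rewrite e, e'. apply Rmult_le_compat_r; auto. nra. Qed.

Lemma monoEB d D1 D2 F G : 0<d -> 0<D1 -> 0<F -> 0<G -> D1 <= D2 ->
  0 < D1*F + d*G - 2*d*F -> 0 < D1*F + d*G - 2*D1*G -> D2*F + d*G - 2*D2*G <= 0 ->
  fE d D1 F G <= c_g D2 G.
Proof.
  intros.
  assert (hK: 0 < (D1-d)*(F-G)) by (apply Kpos; auto; try lra; intros [e1 e2]; subst; nra).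
  destruct (fE_sq d D1 F G hK) as [_ s2].
  apply sq_le. apply fE_ge0. apply c2pos. unfold c_g. rewrite c2sq by nra. rewrite s2.
  set (u := D1 - d) in *. set (w := F - G) in *.
  set (bb1 := D1 * F + d * G - 2 * D1 * G) in *.
  assert (e1 : bb1 = D1*w - G*u) by (unfold bb1,u,w; ring).
  assert (e2 : D2 * F + d * G - 2 * D2 * G = bb1 + (D2-D1)*(F-2*G)) by (unfold bb1; ring).
  assert (h1: bb1 < 2*u*w) by (unfold u,w in *; nra).
  assert (h2: bb1^2 <= 4*G*(D2-D1)*(u*w)).
  { assert (bb1 <= (D2-D1)*(2*G-F)) by lra.
    assert (0 < (D2-D1)*(2*G-F)) by lra.
    assert (0 < D2 - D1) by (destruct (Req_dec D2 D1); [subst; nra| lra]).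
    assert (0 < 2*G - F) by nra.
    assert (bb1^2 <= bb1*((D2-D1)*(2*G-F))) by nra.
    assert (bb1*((D2-D1)*(2*G-F)) <= 2*u*w*((D2-D1)*(2*G-F))) by nra.
    assert (2*u*w*((D2-D1)*(2*G-F)) <= 4*G*(D2-D1)*(u*w)) by nra.
    lra. }
  assert (bb1^2/(u*w) <= 4*G*(D2-D1)).
  { replace (4*G*(D2-D1)) with ((4*G*(D2-D1)*(u*w))/(u*w)) by (field; split; intro h; rewrite h in hK; lra).
    unfold Rdiv. apply Rmult_le_compat_r; auto. left; apply Rinv_0_lt_compat; auto. }
  lra.
Qed.

Lemma monoEE d D1 D2 F G : 0<d -> 0<D1 -> 0<F -> 0<G -> D1 <= D2 ->
  0 < D1*F + d*G - 2*d*F -> 0 < D1*F + d*G - 2*D1*G ->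
  0 < D2*F + d*G - 2*d*F -> 0 < D2*F + d*G - 2*D2*G ->
  fE d D1 F G <= fE d D2 F G.
Proof.
  intros.
  assert (hK1: 0 < (D1-d)*(F-G)) by (apply Kpos; auto; try lra; intros [e1 e2]; subst; nra).
  assert (hK2: 0 < (D2-d)*(F-G)) by (apply Kpos; auto; try lra; intros [e1 e2]; subst; nra).
  apply sq_le; try apply fE_ge0. rewrite !fE_sq3 by auto. apply divle2; auto.
  set (a := D1 - d) in *. set (b := D2 - d) in *. set (w := F - G) in *.
  assert (e: (D2 * F - d * G) ^ 2 * (a * w) - (D1 * F - d * G) ^ 2 * (b * w)
     = w*(b-a)*(F^2*a*b - (d*w)^2)) by (unfold a,b,w; ring).
  assert (hab: 0 <= b - a) by (unfold a,b; lra).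
  assert (aa1: F*a - d*w > 0) by (unfold a,w in *; nra).
  assert (aa2: F*b - d*w > 0) by (unfold b,w in *; nra).
  assert (0 <= w*(b-a)*(F^2*a*b - (d*w)^2)).
  { destruct (Rtotal_order w 0) as [k|[k|k]].
    - assert (a < 0) by nra. assert (b < 0) by nra.
      assert (F*a < 0) by nra. assert (F*b < 0) by nra. assert (d*w < 0) by nra.
      assert ((-(F*a))*(-(F*b)) <= (-(d*w))*(-(F*b))) by (apply Rmult_le_compat_r; lra).
      assert ((-(d*w))*(-(F*b)) <= (-(d*w))*(-(d*w))) by (apply Rmult_le_compat_l; lra).
      replace (w*(b-a)*(F^2*a*b - (d*w)^2)) with ((-w)*(b-a)*((-(d*w))*(-(d*w)) - (-(F*a))*(-(F*b)))) by ring.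
      apply Rmult_le_pos; [apply Rmult_le_pos|]; lra.
    - rewrite k; nra.
    - assert (0 < a) by nra.
      assert (d*w > 0) by nra.
      assert ((d*w)*(d*w) <= (F*a)*(d*w)) by (apply Rmult_le_compat_r; lra).
      assert ((F*a)*(d*w) <= (F*a)*(F*b)) by (apply Rmult_le_compat_l; lra).
      replace (w*(b-a)*(F^2*a*b - (d*w)^2)) with (w*(b-a)*((F*a)*(F*b) - (d*w)*(d*w))) by ring.
      apply Rmult_le_pos; [apply Rmult_le_pos|]; lra. }
  lra.
Qed.

Lemma partIII d F G : 0 < d -> 0 < F -> 0 < G ->
     forall D1 D2 : R, 0 < D1 -> D1 <= D2 ->
       cstar_inf d D1 F G <= cstar_inf d D2 F G.
Proof.
  intros.
  destruct (partI d D2 F G) as [l2 _]; auto; try lra.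
  assert (hm: c_f d F <= cstar_inf d D2 F G /\ c_g D2 G <= cstar_inf d D2 F G).
  { split; eapply Rle_trans; try apply l2. apply Rmax_l. apply Rmax_r. }
  destruct (Rle_or_lt (D1*F + d*G - 2*d*F) 0) as [hA|hA].
  - rewrite csA by auto. lra.
  - destruct (Rle_or_lt (D1*F + d*G - 2*D1*G) 0) as [hB|hB].
    + rewrite csB by auto. unfold c_g in *.
      assert (2*sqrt (D1*G) <= 2*sqrt(D2*G)) by (apply Rmult_le_compat_l; [lra|]; apply sqrt_le_1_alt; nra).
      lra.
    + rewrite csE by auto.
      assert (hA2: 0 < D2*F + d*G - 2*d*F) by nra.
      destruct (Rle_or_lt (D2*F + d*G - 2*D2*G) 0) as [hB2|hB2].
      * rewrite csB by (auto; lra). apply monoEB; auto.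
      * rewrite (csE d D2) by (auto; lra). apply monoEE; auto.
Qed.

Section CC.
Context {U : UniformSpace}.
Lemma cplus (f g : U -> R) x : continuous f x -> continuous g x -> continuous (fun p => f p + g p) x.
Proof. intros. exact (continuous_plus f g x H H0). Qed.
Lemma cmult (f g : U -> R) x : continuous f x -> continuous g x -> continuous (fun p => f p * g p) x.
Proof. intros. exact (continuous_mult f g x H H0). Qed.
Lemma cconst (c : R) (x : U) : continuous (fun _ => c) x.
Proof. apply continuous_const. Qed.
Lemma copp (f : U -> R) x : continuous f x -> continuous (fun p => - f p) x.
Proof. intros. apply (continuous_ext (fun p => (-1) * f p)). intros; cbv beta; lra.
  apply cmult; auto. apply cconst. Qed.
Lemma cminus (f g : U -> R) x : continuous f x -> continuous g x -> continuous (fun p => f p - g p) x.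
Proof. intros. apply cplus; auto. apply copp; auto. Qed.
Lemma csqrt (f : U -> R) x : continuous f x -> continuous (fun p => sqrt (f p)) x.
Proof. intros. apply (continuous_comp f sqrt); auto. apply continuous_sqrt. Qed.
Lemma cabs (f : U -> R) x : continuous f x -> continuous (fun p => Rabs (f p)) x.
Proof. intros. apply (continuous_comp f Rabs); auto. apply continuous_Rabs. Qed.
Lemma cinv (f : U -> R) x : continuous f x -> f x <> 0 -> continuous (fun p => / (f p)) x.
Proof. intros. apply (continuous_comp f Rinv); auto. apply continuous_Rinv; auto. Qed.
Lemma cdiv (f g : U -> R) x : continuous f x -> continuous g x -> g x <> 0 -> continuous (fun p => f p / g p) x.
Proof. intros. apply cmult; auto. apply cinv; auto. Qed.
Lemma cmax (f g : U -> R) x : continuous f x -> continuous g x -> continuous (fun p => Rmax (f p) (g p)) x.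
Proof. intros. apply (continuous_ext (fun p => (f p + g p + Rabs (f p - g p)) / 2)).
  intros. unfold Rmax, Rabs; destruct Rle_dec; destruct Rcase_abs; lra.
  apply cdiv. apply cplus. apply cplus; auto. apply cabs, cminus; auto. apply cconst. lra. Qed.

Lemma loc_pos (f : U -> R) x : continuous f x -> 0 < f x -> locally x (fun p => 0 < f p).
Proof. intros. assert (hl: locally (f x) (fun y => 0 < y)).
  { exists (mkposreal _ H0). intros y hy. unfold ball in hy; simpl in hy. unfold AbsRing_ball in hy.
    unfold abs, minus, plus, opp in hy; simpl in hy. apply Rabs_lt_between in hy. simpl in hy. lra. }
  apply H in hl. exact hl. Qed.
Lemma loc_close (f : U -> R) x eps : continuous f x -> 0 < eps -> locally x (fun p => Rabs (f p - f x) < eps).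
Proof. intros. assert (hl: locally (f x) (fun y => Rabs (y - f x) < eps)).
  { exists (mkposreal _ H0). intros y hy. unfold ball in hy; simpl in hy. unfold AbsRing_ball in hy.
    unfold abs, minus, plus, opp in hy; simpl in hy. exact hy. }
  apply H in hl. exact hl. Qed.
End CC.

Definition q1 (p : R*R*R*R) := fst (fst (fst p)).
Definition q2 (p : R*R*R*R) := snd (fst (fst p)).
Definition q3 (p : R*R*R*R) := snd (fst p).
Definition q4 (p : R*R*R*R) := snd p.

Lemma cfst {U V : UniformSpace} (p : U*V) : continuous fst p.
Proof. destruct p; apply continuous_fst. Qed.
Lemma csnd {U V : UniformSpace} (p : U*V) : continuous snd p.
Proof. destruct p; apply continuous_snd. Qed.
Lemma cq1 p : continuous q1 p.
Proof. unfold q1. apply (continuous_comp (fun p : R*R*R*R => fst (fst p)) fst).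
  apply (continuous_comp (fun p : R*R*R*R => fst p) fst). apply cfst. apply cfst. apply cfst. Qed.
Lemma cq2 p : continuous q2 p.
Proof. unfold q2. apply (continuous_comp (fun p : R*R*R*R => fst (fst p)) snd).
  apply (continuous_comp (fun p : R*R*R*R => fst p) fst). apply cfst. apply cfst. apply csnd. Qed.
Lemma cq3 p : continuous q3 p.
Proof. unfold q3. apply (continuous_comp (fun p : R*R*R*R => fst p) snd). apply cfst. apply csnd. Qed.
Lemma cq4 p : continuous q4 p.
Proof. unfold q4. apply csnd. Qed.

Lemma loc_ext (P : R*R*R*R -> Prop) d0 D0 F0 G0 : locally (d0,D0,F0,G0) P ->
  exists delta, 0 < delta /\ forall d D F G, Rabs (d-d0) < delta -> Rabs (D-D0) < delta ->
   Rabs (F-F0) < delta -> Rabs (G-G0) < delta -> P (d,D,F,G).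
Proof. intros [e He]. exists e. split. apply cond_pos. intros. apply He.
  repeat split; assumption. Qed.

Definition cP p := cstar_inf (q1 p) (q2 p) (q3 p) (q4 p).
Definition aP p := q2 p * q3 p + q1 p * q4 p - 2 * q1 p * q3 p.
Definition bP p := q2 p * q3 p + q1 p * q4 p - 2 * q2 p * q4 p.
Definition fAP p := 2 * sqrt (q1 p * q3 p).
Definition fBP p := 2 * sqrt (q2 p * q4 p).
Definition fEP p := Rabs (q2 p * q3 p - q1 p * q4 p) / sqrt ((q2 p - q1 p) * (q3 p - q4 p)).
Definition LP p := Rmax (2 * sqrt (q1 p * q3 p)) (2 * sqrt (q2 p * q4 p)).
Definition UP p := 2 * sqrt (Rmax (q2 p) (q1 p) * Rmax (q4 p) (q3 p)).
Definition posP p := 0 < q1 p /\ 0 < q2 p /\ 0 < q3 p /\ 0 < q4 p.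

Ltac cont1 := lazymatch goal with
  | |- continuous (fun p => _ + _) _ => apply cplus
  | |- continuous (fun p => _ - _) _ => apply cminus
  | |- continuous (fun p => - _) _ => apply copp
  | |- continuous (fun p => _ * _) _ => apply cmult
  | |- continuous (fun p => sqrt _) _ => apply csqrt
  | |- continuous (fun p => Rabs _) _ => apply cabs
  | |- continuous (fun p => Rmax _ _) _ => apply cmax
  | |- continuous (fun p => q1 p) _ => apply cq1
  | |- continuous (fun p => q2 p) _ => apply cq2
  | |- continuous (fun p => q3 p) _ => apply cq3
  | |- continuous (fun p => q4 p) _ => apply cq4
  | |- continuous q1 _ => apply cq1
  | |- continuous q2 _ => apply cq2
  | |- continuous q3 _ => apply cq3
  | |- continuous q4 _ => apply cq4
  | |- continuous (fun p => _) _ => apply cconst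
  end.
Ltac cont := repeat cont1.

Lemma caP p : continuous aP p. Proof. unfold aP. cont. Qed.
Lemma cbP p : continuous bP p. Proof. unfold bP. cont. Qed.
Lemma cfAP p : continuous fAP p. Proof. unfold fAP. cont. Qed.
Lemma cfBP p : continuous fBP p. Proof. unfold fBP. cont. Qed.
Lemma cLP p : continuous LP p. Proof. unfold LP. cont. Qed.
Lemma cUP p : continuous UP p. Proof. unfold UP. cont. Qed.
Lemma cfEP p : 0 < (q2 p - q1 p) * (q3 p - q4 p) -> continuous fEP p.
Proof. intros. unfold fEP. apply cdiv. cont. cont. apply Rgt_not_eq, sqrt_lt_R0; auto. Qed.

Lemma locpos p : posP p -> locally p posP.
Proof. intros (h1&h2&h3&h4).
  apply filter_and. apply loc_pos; auto; apply cq1.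
  apply filter_and. apply loc_pos; auto; apply cq2.
  apply filter_and. apply loc_pos; auto; apply cq3. apply loc_pos; auto; apply cq4. Qed.

Lemma locneg (f : R*R*R*R -> R) p : continuous f p -> f p < 0 -> locally p (fun x => f x < 0).
Proof. intros. eapply filter_imp. 2: apply (loc_pos (fun x => - f x)). simpl; intros; lra.
  apply copp; auto. lra. Qed.

Lemma sq_eq a b : 0<=a -> 0<=b -> a^2 = b^2 -> a = b.
Proof. intros. nra. Qed.

Lemma cP_cont p : posP p -> forall eps, 0 < eps -> locally p (fun x => Rabs (cP x - cP p) < eps).
Proof.
  intros hp eps he. pose proof (locpos p hp) as lp.
  destruct p as [[[d0 D0] F0] G0]. destruct hp as (h1&h2&h3&h4). unfold q1,q2,q3,q4 in *; simpl in *.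
  assert (Hc: forall x, posP x -> cP x = cstar_inf (q1 x) (q2 x) (q3 x) (q4 x)) by reflexivity.
  change (cP (d0,D0,F0,G0)) with (cstar_inf d0 D0 F0 G0). unfold cP.
  destruct (Rtotal_order (aP (d0,D0,F0,G0)) 0) as [ha|[ha|ha]]; unfold aP, q1,q2,q3,q4 in ha; simpl in ha.
  -
    assert (E0: cstar_inf d0 D0 F0 G0 = c_f d0 F0) by (apply csA; auto; lra). rewrite E0.
    pose proof (locneg aP (d0,D0,F0,G0) (caP _) ha) as la.
    pose proof (loc_close fAP (d0,D0,F0,G0) eps (cfAP _) he) as lf.
    eapply filter_imp; [|exact (filter_and _ _ lp (filter_and _ _ la lf))].
    intros x (px&ax&fx). destruct px as (x1&x2&x3&x4). unfold aP, fAP in *.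
    rewrite csA by (auto; lra). unfold c_f. simpl in fx. exact fx.
  - destruct (Rle_or_lt (bP (d0,D0,F0,G0)) 0) as [hb|hb]; unfold bP, q1,q2,q3,q4 in hb; simpl in hb.
    +
      destruct (corner d0 D0 F0 G0) as [e1 e2]; auto; try lra. subst D0 G0.
      assert (E0: cstar_inf d0 d0 F0 F0 = c_f d0 F0) by (apply csA; auto; lra). rewrite E0.
      assert (eL: LP (d0,d0,F0,F0) = c_f d0 F0) by (unfold LP, c_f, q1,q2,q3,q4; simpl; apply Rmax_left; lra).
      assert (eU: UP (d0,d0,F0,F0) = c_f d0 F0) by (unfold UP, c_f, q1,q2,q3,q4; simpl; rewrite Rmax_left, Rmax_left; lra).
      pose proof (loc_close LP (d0,d0,F0,F0) eps (cLP _) he) as l1.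
      pose proof (loc_close UP (d0,d0,F0,F0) eps (cUP _) he) as l2.
      rewrite eL in l1. rewrite eU in l2.
      eapply filter_imp; [|exact (filter_and _ _ lp (filter_and _ _ l1 l2))].
      intros x (px&ax&fx). destruct px as (x1&x2&x3&x4).
      destruct (partI (q1 x) (q2 x) (q3 x) (q4 x)) as (i1&i2&_); auto.
      assert (j1: LP x <= cstar_inf (q1 x) (q2 x) (q3 x) (q4 x)) by exact i1.
      assert (j2: cstar_inf (q1 x) (q2 x) (q3 x) (q4 x) <= UP x) by exact i2.
      apply Rabs_lt_between in ax. apply Rabs_lt_between in fx. apply Rabs_lt_between. lra.
    +
      assert (hK: 0 < (D0-d0)*(F0-G0)) by (apply Kpos; auto; try lra; intros [e1 e2]; subst; lra).
      assert (E0: cstar_inf d0 D0 F0 G0 = c_f d0 F0) by (apply csA; auto; lra). rewrite E0.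
      assert (ee: fE d0 D0 F0 G0 = c_f d0 F0).
      { destruct (fE_sq d0 D0 F0 G0 hK) as [s1 _]. apply sq_eq. apply fE_ge0. apply c2pos.
        unfold c_f; rewrite c2sq by nra. rewrite s1, ha. unfold Rdiv; ring. }
      pose proof (loc_pos bP (d0,D0,F0,G0) (cbP _) hb) as lb.
      pose proof (loc_close fAP (d0,D0,F0,G0) eps (cfAP _) he) as lf.
      pose proof (loc_close fEP (d0,D0,F0,G0) eps (cfEP (d0,D0,F0,G0) hK) he) as lg.
      eapply filter_imp; [|exact (filter_and _ _ lp (filter_and _ _ lb (filter_and _ _ lf lg)))].
      intros x (px&bx&fx&gx). destruct px as (x1&x2&x3&x4). unfold bP, fAP, fEP in *.
      simpl in fx, gx. 
      destruct (Rle_or_lt (q2 x * q3 x + q1 x * q4 x - 2 * q1 x * q3 x) 0).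
      * rewrite csA by (auto; lra). exact fx.
      * rewrite csE by (auto; lra). rewrite <- ee. exact gx.
  - destruct (Rtotal_order (bP (d0,D0,F0,G0)) 0) as [hb|[hb|hb]]; unfold bP, q1,q2,q3,q4 in hb; simpl in hb.
    + assert (E0: cstar_inf d0 D0 F0 G0 = c_g D0 G0) by (apply csB; auto; lra). rewrite E0.
      pose proof (loc_pos aP (d0,D0,F0,G0) (caP _) ha) as la.
      pose proof (locneg bP (d0,D0,F0,G0) (cbP _) hb) as lb.
      pose proof (loc_close fBP (d0,D0,F0,G0) eps (cfBP _) he) as lf.
      eapply filter_imp; [|exact (filter_and _ _ lp (filter_and _ _ la (filter_and _ _ lb lf)))].
      intros x (px&ax&bx&fx). destruct px as (x1&x2&x3&x4). unfold aP, bP, fBP in *.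
      rewrite csB by (auto; lra). exact fx.
    + assert (hK: 0 < (D0-d0)*(F0-G0)) by (apply Kpos; auto; try lra; intros [e1 e2]; subst; lra).
      assert (E0: cstar_inf d0 D0 F0 G0 = c_g D0 G0) by (apply csB; auto; lra). rewrite E0.
      assert (ee: fE d0 D0 F0 G0 = c_g D0 G0).
      { destruct (fE_sq d0 D0 F0 G0 hK) as [_ s2]. apply sq_eq. apply fE_ge0. apply c2pos.
        unfold c_g; rewrite c2sq by nra. rewrite s2, hb. unfold Rdiv; ring. }
      pose proof (loc_pos aP (d0,D0,F0,G0) (caP _) ha) as la.
      pose proof (loc_close fBP (d0,D0,F0,G0) eps (cfBP _) he) as lf.
      pose proof (loc_close fEP (d0,D0,F0,G0) eps (cfEP (d0,D0,F0,G0) hK) he) as lg.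
      eapply filter_imp; [|exact (filter_and _ _ lp (filter_and _ _ la (filter_and _ _ lf lg)))].
      intros x (px&ax&fx&gx). destruct px as (x1&x2&x3&x4). unfold aP, fBP, fEP in *.
      simpl in fx, gx. 
      destruct (Rle_or_lt (q2 x * q3 x + q1 x * q4 x - 2 * q2 x * q4 x) 0).
      * rewrite csB by (auto; lra). exact fx.
      * rewrite csE by (auto; lra). rewrite <- ee. exact gx.
    + assert (hK: 0 < (D0-d0)*(F0-G0)) by (apply Kpos; auto; try lra; intros [e1 e2]; subst; lra).
      assert (E0: cstar_inf d0 D0 F0 G0 = fE d0 D0 F0 G0) by (apply csE; auto; lra). rewrite E0.
      pose proof (loc_pos aP (d0,D0,F0,G0) (caP _) ha) as la.
      pose proof (loc_pos bP (d0,D0,F0,G0) (cbP _) hb) as lb.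
      pose proof (loc_close fEP (d0,D0,F0,G0) eps (cfEP (d0,D0,F0,G0) hK) he) as lg.
      eapply filter_imp; [|exact (filter_and _ _ lp (filter_and _ _ la (filter_and _ _ lb lg)))].
      intros x (px&ax&bx&gx). destruct px as (x1&x2&x3&x4). unfold aP, bP, fEP in *.
      rewrite csE by (auto; lra). exact gx.
Qed.

Lemma partIV d F G : 0 < d -> 0 < F -> 0 < G ->
     exists L : R, 0 < L /\
       forall eps : R, 0 < eps -> exists M : R, 0 < M /\
         forall D : R, M < D -> Rabs (cstar_inf d D F G / sqrt D - L) < eps.
Proof.
  intros hd hF hG.
  destruct (Rlt_or_le F (2*G)) as [hc|hc].
  - exists (2*sqrt G). split. apply Rmult_lt_0_compat; [lra|apply sqrt_lt_R0; auto].
    intros eps he. exists (Rmax (2*d) (d*G/(2*G-F)) + 1). split.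
    { pose proof (Rmax_l (2*d) (d*G/(2*G-F))). lra. }
    intros D hD. pose proof (Rmax_l (2*d) (d*G/(2*G-F))). pose proof (Rmax_r (2*d) (d*G/(2*G-F))).
    assert (hD0: 0 < D) by lra.
    assert (hb: D*(2*G-F) >= d*G).
    { assert (d*G/(2*G-F) * (2*G-F) = d*G) by (field; lra). nra. }
    rewrite csB by (auto; nra). unfold c_g. rewrite sqrt_mult by lra.
    replace (2 * (sqrt D * sqrt G) / sqrt D - 2 * sqrt G) with 0.
    rewrite Rabs_R0; auto.
    field. apply Rgt_not_eq, sqrt_lt_R0; auto.
  - set (h := fun s : R => (F - d*G*s) / sqrt ((1 - d*s)*(F-G))).
    assert (hFG: 0 < F - G) by lra.
    assert (ch: continuous h 0).
    { unfold h. apply cdiv. apply cminus. apply cconst. apply cmult. apply cconst. apply continuous_id.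
      apply csqrt. apply cmult. apply cminus. apply cconst. apply cmult. apply cconst. apply continuous_id.
      apply cconst. apply Rgt_not_eq, sqrt_lt_R0. lra. }
    assert (h0: h 0 = F / sqrt (F-G)) by (unfold h; f_equal; [ring| f_equal; ring]).
    exists (h 0). split. rewrite h0. apply Rdiv_lt_0_compat; auto. apply sqrt_lt_R0; auto.
    intros eps he. destruct (loc_close h 0 eps ch he) as [del Hdel].
    exists (Rmax (2*d) (/del) + 1). split.
    { pose proof (Rmax_l (2*d) (/del)). lra. }
    intros D hD. pose proof (Rmax_l (2*d) (/del)). pose proof (Rmax_r (2*d) (/del)).
    assert (hD0: 0 < D) by lra.
    assert (hdel: 0 < del) by apply cond_pos.
    rewrite csE by (auto; nra).
    assert (e: fE d D F G / sqrt D = h (/D)).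
    { assert (hs: d * / D < 1) by (apply (Rmult_lt_reg_r D); [lra|]; rewrite Rmult_assoc, Rinv_l; lra).
      unfold fE, h. rewrite Rabs_pos_eq by nra.
      replace ((D - d) * (F - G)) with (D * ((1 - d * / D) * (F - G))) by (field; lra).
      rewrite sqrt_mult; [|lra|apply Rmult_le_pos; lra].
      assert (0 < sqrt D) by (apply sqrt_lt_R0; auto).
      assert (0 < sqrt ((1 - d * / D) * (F - G))).
      { apply sqrt_lt_R0. apply Rmult_lt_0_compat; lra. }
      assert (sqrt D * sqrt D = D) by (apply sqrt_sqrt; lra).
      field_simplify; try lra. rewrite pow2_sqrt by lra. reflexivity. }
    rewrite e. apply Hdel.
    unfold ball; simpl. unfold AbsRing_ball, abs, minus, plus, opp; simpl.
    rewrite Ropp_0, Rplus_0_r. rewrite Rabs_pos_eq.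
    apply (Rmult_lt_reg_r D); [lra|]. rewrite Rinv_l by lra.
    assert (/del * del = 1) by (apply Rinv_l; lra).
    assert (del * D > 1) by nra. lra.
    left; apply Rinv_0_lt_compat; lra.
Qed.

Theorem proposition2p9 :
  (* (i) bounds and strictness characterization *)
  (forall d D fp gp : R, 0 < d -> 0 < D -> 0 < fp -> 0 < gp ->
     Rmax (c_f d fp) (c_g D gp) <= cstar_inf d D fp gp /\
     cstar_inf d D fp gp <= 2 * sqrt (Rmax D d * Rmax gp fp) /\
     (cstar_inf d D fp gp < 2 * sqrt (Rmax D d * Rmax gp fp) <->
        ((D > d /\ fp > gp) \/ (D < d /\ fp < gp)))) /\
  (* (ii) continuity on (0,+oo)^4 *)
  (forall d0 D0 fp0 gp0 : R, 0 < d0 -> 0 < D0 -> 0 < fp0 -> 0 < gp0 ->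
     forall eps : R, 0 < eps -> exists delta : R, 0 < delta /\
       forall d D fp gp : R, 0 < d -> 0 < D -> 0 < fp -> 0 < gp ->
         Rabs (d - d0) < delta -> Rabs (D - D0) < delta ->
         Rabs (fp - fp0) < delta -> Rabs (gp - gp0) < delta ->
         Rabs (cstar_inf d D fp gp - cstar_inf d0 D0 fp0 gp0) < eps) /\
  (* (iii) monotonicity in D *)
  (forall d fp gp : R, 0 < d -> 0 < fp -> 0 < gp ->
     forall D1 D2 : R, 0 < D1 -> D1 <= D2 ->
       cstar_inf d D1 fp gp <= cstar_inf d D2 fp gp) /\
  (* (iv) c^*_infty(D)/sqrt D has a finite positive limit as D -> +oo *)
  (forall d fp gp : R, 0 < d -> 0 < fp -> 0 < gp ->
     exists L : R, 0 < L /\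
       forall eps : R, 0 < eps -> exists M : R, 0 < M /\
         forall D : R, M < D -> Rabs (cstar_inf d D fp gp / sqrt D - L) < eps).
Proof.
  split; [|split; [|split]].
  - exact partI.
  - intros d0 D0 F0 G0 h1 h2 h3 h4 eps he.
    assert (hp: posP (d0,D0,F0,G0)) by (unfold posP, q1,q2,q3,q4; simpl; auto).
    destruct (loc_ext _ d0 D0 F0 G0 (cP_cont _ hp eps he)) as [delta [hd H]].
    exists delta. split; auto. intros. exact (H d D fp gp H4 H5 H6 H7).
  - exact partIII.
  - exact partIV.
Qed.
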